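(* Let $\Omega\subset\mathbb{R}^n$ be open, $\omega$ a weight, $1\le p<q<\infty$, $a\in L^\infty(\Omega)$ non-negative, and $\varphi(x,t)=t^p+a(x)t^q$. Then $\varphi$ satisfies (A1)$_\omega$ if and only if there is a constant $C$ such that \[a(x)\le C\big(a(y)+\omega(B)^{\frac{q-p}{p}}\big)\] for every open ball $B$ and every $x,y\in B\cap\Omega$.
   Context: A weight is a nonnegative locally integrable function $\omega$ on $\mathbb{R}^n$, $\omega(E):=\int_E\omega\,dx$. (A1)$_\omega$: there is $\beta_1\in(0,1]$ such that $\varphi(x,\beta_1t)\le\varphi(y,t)$ for every open ball $B$ with $\omega(B)\le1$, a.e. $x,y\in B\cap\Omega$, and every $t\ge0$ with $\varphi(y,t)\in[1,1/\omega(B)]$. *)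

(* Defs.v *)
(* R^n is modelled as [n.-tuple R] with the library's
   product (= Borel) sigma-algebra; Lebesgue measure on it is defined below as the
   iterated product of one-dimensional Lebesgue measures. *)
From mathcomp Require Import all_boot all_order all_algebra.
From mathcomp Require Import all_classical all_reals all_analysis.
Set Implicit Arguments. Unset Strict Implicit. Unset Printing Implicit Defensive.
Import Order.TTheory GRing.Theory Num.Theory.
Local Open Scope classical_set_scope.
Local Open Scope ring_scope.

Section Defs.
Variable R : realType.

Fixpoint lebn (n : nat) : set (n.-tuple R) -> \bar R :=
  match n return set (n.-tuple R) -> \bar R with
  | 0 => fun A => (\1_A [tuple] : R)%:E
  | k.+1 => fun A =>
      ((@lebn k) \x (@lebesgue_measure R))%E
        [set p : k.-tuple R * R | A (cons_tuple p.2 p.1)]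
  end.

Definition edist n (x y : n.-tuple R) : R :=
  Num.sqrt (\sum_(i < n) (tnth x i - tnth y i) ^+ 2).

Definition eball n (x : n.-tuple R) (r : R) : set (n.-tuple R) :=
  [set y | edist x y < r].

Definition is_open_ball n (B : set (n.-tuple R)) : Prop :=
  exists x r, 0 < r /\ B = eball x r.

Definition open_Rn n (O : set (n.-tuple R)) : Prop :=
  forall x, O x -> exists r, 0 < r /\ eball x r `<=` O.

Definition wmeas n (w : n.-tuple R -> R) (E : set (n.-tuple R)) : \bar R :=
  (\int[@lebn n]_(x in E) (w x)%:E)%E.

Definition is_weight n (w : n.-tuple R -> R) : Prop :=
  (forall x, 0 <= w x) /\
  (forall x r, 0 < r -> (@lebn n).-integrable (eball x r) (EFin \o w)).

Definition Linfty n (O : set (n.-tuple R)) (a : n.-tuple R -> R) : Prop :=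
  measurable_fun O a /\
  exists M : R, {ae @lebn n, forall x, O x -> `|a x| <= M}.

(* condition (A1)_omega for phi : R^n -> [0,oo) -> R on O.
   "phi(y,t) \in [1, 1/omega(B)]" is written as 1 <= phi(y,t) and
   phi(y,t) * omega(B) <= 1 (so that omega(B) = 0 gives [1,oo)). *)
Definition A1w n (w : n.-tuple R -> R) (O : set (n.-tuple R))
    (phi : n.-tuple R -> R -> R) : Prop :=
  exists beta1 : R, 0 < beta1 <= 1 /\
  forall B, is_open_ball B -> (wmeas w B <= 1)%E ->
    {ae @lebn n, forall x, (B `&` O) x ->
      {ae @lebn n, forall y, (B `&` O) y ->
        forall t : R, 0 <= t -> 1 <= phi y t ->
          ((phi y t)%:E * wmeas w B <= 1)%E ->
          phi x (beta1 * t) <= phi y t}}.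

Definition double_phase n (p q : R) (a : n.-tuple R -> R) :
    n.-tuple R -> R -> R :=
  fun x t => t `^ p + a x * t `^ q.

End Defs.

(* Main.v *)
Require Import Defs.
From mathcomp Require Import all_boot all_order all_algebra.
From mathcomp Require Import all_classical all_reals all_analysis.
From mathcomp Require Import ring lra.
Import Order.TTheory GRing.Theory Num.Theory.
Local Open Scope classical_set_scope.
Local Open Scope ring_scope.

Lemma infinite_nonzero (R : realType) : infinite_set [set x : R | x != 0].
Proof.
apply/infiniteP/(@pcard_leP nat R^o)/injfunPex; exists (fun n : nat => n.+1%:R : R).
- by move=> n _ /=; rewrite pnatr_eq0.
- by move=> m k _ _ /= /eqP; rewrite eqr_nat => /eqP [].
Qed.

Lemma sintegral_cst0 d (T : measurableType d) (R : realType) (mu : set T -> \bar R)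
  (h : T -> R) : (forall x, h x = 0) -> sintegral mu h = 0%E.
Proof.
move=> h0; rewrite /sintegral.
have [m0|m0] := eqVneq (mu set0) 0%E.
  apply: fsbig1 => x _.
  have [->|x0] := eqVneq x 0; first by rewrite mul0e.
  have -> : h @^-1` [set x] = set0.
    by apply/seteqP; split => // y /=; rewrite h0 => /esym/eqP; rewrite (negbTE x0).
  by rewrite m0 mule0.
apply: fsbig_dflt; apply: (sub_infinite_set _ (@infinite_nonzero R)).
move=> x /= x0; split => //.
have -> : h @^-1` [set x] = set0.
  by apply/seteqP; split => // y /=; rewrite h0 => /esym/eqP; rewrite (negbTE x0).
by apply/eqP; rewrite mule_eq0 negb_or eqe x0.
Qed.

Import HBNNSimple.

Lemma integral_ge0_any d (T : measurableType d) (R : realType) (mu : set T -> \bar R)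
  D (f : T -> \bar R) : (forall x, D x -> (0 <= f x)%E) -> (0 <= integral mu D f)%E.
Proof.
move=> f0; rewrite /integral.
set g := f \_ D.
have g0 : forall x, (0 <= g x)%E.
  by move=> x; rewrite /g /patch; case: ifP => // /[1!inE] /f0.
have gn x : (g^\- x = 0)%E.
  exact: (@ge0_funenegE _ _ setT g (fun y _ => g0 y) x (in_setT x)).
have -> : [set sintegral mu h | h in [set h : {nnsfun T >-> R} | forall x, ((h x)%:E <= g^\- x)%E]] = [set 0%E].
  apply/seteqP; split => [_ [h /= hle <-]|_ ->].
    apply: sintegral_cst0 => x; apply/eqP; rewrite eq_le fun_ge0 andbT.
    by have := hle x; rewrite gn lee_fin.
  exists (@nnsfun0 _ T R) => //=; last exact: sintegral_cst0.
  by move=> x; rewrite gn.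
rewrite ereal_sup1 sube0.
apply: ereal_sup_ubound; exists (@nnsfun0 _ T R) => //=; last exact: sintegral_cst0.
by move=> x; rewrite /= funepos_ge0.
Qed.

Section Real.
Variable R : realType.

Lemma powR_le_inv (k x y : R) : 0 < k -> 0 <= x -> 0 <= y ->
  x `^ k <= y `^ k -> x <= y.
Proof.
move=> k0 x0 y0 h; rewrite leNgt; apply/negP => yx.
have := gt0_ltr_powR k0 y0 x0 yx; rewrite ltNge h //.
Qed.

Lemma powR1k (T k : R) : 0 < T -> T `^ (1 + k) = T * T `^ k.
Proof.
move=> T0; rewrite powRD ?powRr1 ?ltW//.
by apply/implyP => _; rewrite gt_eqF.
Qed.

Lemma powR_inv_pow (x k : R) : 0 <= x -> k != 0 -> (x `^ k^-1) `^ k = x.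
Proof. by move=> x0 k0; rewrite -powRrM mulVf // powRr1. Qed.

Lemma step1 {p q beta b A s : R} : 1 <= p -> p < q -> 0 < beta ->
 (forall t, 0 <= t -> 1 <= t `^ p + b * t `^ q -> (t `^ p + b * t `^ q) * s <= 1 ->
    (beta * t) `^ p + A * (beta * t) `^ q <= t `^ p + b * t `^ q) ->
 forall T, 0 < T -> 1 <= T + b * (T * T `^ ((q-p)/p)) ->
   (T + b * (T * T `^ ((q-p)/p))) * s <= 1 ->
 A * beta `^ q * (T * T `^ ((q-p)/p)) <= T + b * (T * T `^ ((q-p)/p)).
Proof.
move=> p1 pq b0 H T T0 h1 h2.
have p0 : p != 0 by apply/eqP => p0; rewrite p0 in p1; lra.
set t := T `^ p^-1.
have tp : t `^ p = T by rewrite powR_inv_pow // ltW.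
have tq : t `^ q = T * T `^ ((q-p)/p).
  rewrite /t -powRrM; have -> : p^-1 * q = 1 + (q-p)/p by field.
  exact: powR1k.
have := H t (powR_ge0 _ _); rewrite tp tq => /(_ h1 h2).
rewrite !(powRM _ (ltW b0) (powR_ge0 _ _)) tp tq => h.
have := mulr_ge0 (powR_ge0 beta p) (ltW T0).
lra.
Qed.

Lemma core1 (p q beta b A s : R) : 1 <= p -> p < q -> 0 < beta -> 0 <= s ->
 s <= 2^-1 -> 0 <= b ->
 (forall t, 0 <= t -> 1 <= t `^ p + b * t `^ q -> (t `^ p + b * t `^ q) * s <= 1 ->
    (beta * t) `^ p + A * (beta * t) `^ q <= t `^ p + b * t `^ q) ->
 A * beta `^ q <= (2 `^ ((q-p)/p) + 2) * (b + s `^ ((q-p)/p)).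
Proof.
move=> p1 pq b0 s0 s2 bge0 H.
have H' := step1 p1 pq b0 H.
set k := (q-p)/p in H' *.
have k0 : 0 < k by rewrite /k divr_gt0 // ?subr_gt0 //; lra.
have k0' : k != 0 by rewrite gt_eqF.
set c := 2 `^ k.
have c1 : 1 <= c.
  have := @ler_powR R 2 _ 0 k (ltW k0); rewrite powRr0; apply; lra.
have half : (2^-1) `^ k = c^-1.
  apply: (mulIf (x := c)); first by rewrite gt_eqF //; lra.
  rewrite mulVf; last by rewrite gt_eqF //; lra.
  by rewrite /c -powRM ?mulVf ?powR1 //; lra.
have sk0 : 0 <= s `^ k by exact: powR_ge0.
set Y := A * beta `^ q.
case: (ltrP 1 b) => hb.
  set T := b^-1 `^ (1+k)^-1.
  have T0 : 0 < T by apply: powR_gt0; rewrite invr_gt0; lra.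
  have P : T * T `^ k = b^-1.
    rewrite -powR1k // powR_inv_pow //; first by rewrite invr_ge0; lra.
    by rewrite gt_eqF //; lra.
  have T1 : T <= 1.
    apply: (@powR_le_inv (1+k)); [lra|lra|lra|].
    rewrite powR1k // P powR1 /=; rewrite invf_le1; lra.
  have bP : b * (T * T `^ k) = 1 by rewrite P mulfV // gt_eqF //; lra.
  have := H' T T0; rewrite bP P => h.
  have {h} h : Y * b^-1 <= T + 1 by apply: h; nra.
  have e : Y = Y * b^-1 * b by rewrite -mulrA mulVf ?mulr1 // gt_eqF //; lra.
  have : Y <= 2 * b by rewrite e; nra.
  nra.
apply/ler_addgt0Pr => e e0.
set eps := e / (c + 1).
have eps0 : 0 < eps by rewrite /eps divr_gt0 //; lra.
have ee : e = (c + 1) * eps by rewrite /eps mulrC -mulrA mulVf ?mulr1 // gt_eqF //; lra.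
set v := b + s `^ k + eps.
have v0 : 0 < v by rewrite /v; lra.
case: (ltrP 1 (c * v)) => hv.
  have := H' 1 ltr01; rewrite powR1 /= !mulr1 => h.
  have {h} h : Y <= 1 + b by apply: h; nra.
  rewrite ee; rewrite /v in hv; nra.
set X := (c * v)^-1.
have X0 : 0 < X by rewrite /X invr_gt0; nra.
set T := X `^ k^-1.
have Tk : T `^ k = X by rewrite powR_inv_pow // ltW.
have T0 : 0 < T by apply: powR_gt0.
have T1 : 1 <= T.
  apply: (@powR_le_inv k); [lra|lra|lra|].
  rewrite Tk powR1 /= /X invf_ge1 //; nra.
have sT : s * T <= 2^-1.
  apply: (@powR_le_inv k); [lra|nra|lra|].
  rewrite powRM ?Tk ?half; [|lra|lra].
  rewrite /X invfM [c^-1 * _]mulrC mulrA ler_piMl ?invr_ge0 ?ler_pdivrMr //; first by rewrite ?mul1r /v; lra.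
  by rewrite mul1r /v; lra.
have bX : b * X <= 1.
  rewrite /X ler_pdivrMr ?mul1r; last by nra.
  rewrite /v; nra.
have := H' T T0; rewrite Tk => h.
have sT0 : 0 <= s * T by nra.
have bX0 : 0 <= b * X by nra.
have m1 : (s * T) * (b * X) <= s * T by rewrite ler_piMr.
have m2 : (T + b * (T * X)) * s = s * T + (s * T) * (b * X) by ring.
have m3 : 0 <= b * (T * X) by rewrite mulrA; nra.
have {h} h : Y * (T * X) <= T + b * (T * X) by apply: h; [lra|rewrite m2; lra].
have eq1 : T + b * (T * X) = (T * X) * (X^-1 + b).
  by rewrite mulrDr -mulrA mulfV ?mulr1 1?mulrC // gt_eqF.
rewrite eq1 mulrC ler_pM2l in h; last by nra.
rewrite /X invrK in h.
rewrite ee; rewrite /v in h; nra.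
Qed.

Lemma core2 (p q beta C s b A t : R) : 1 <= p -> p < q -> 0 < beta -> beta <= 1 ->
  0 <= C -> beta * (1 + C) <= 1 -> 0 <= s -> 0 <= b -> 0 <= A ->
  A <= C * (b + s `^ ((q-p)/p)) -> 0 <= t -> (t `^ p + b * t `^ q) * s <= 1 ->
  (beta * t) `^ p + A * (beta * t) `^ q <= t `^ p + b * t `^ q.
Proof.
move=> p1 pq b0 b1 C0 bC s0 bge0 A0 hA t0 hs.
set k := (q-p)/p in hA *.
have k0 : 0 < k by rewrite /k divr_gt0 // ?subr_gt0 //; lra.
have p0 : p != 0 by apply/eqP => p0; rewrite p0 in p1; lra.
set P := t `^ p; set Q := t `^ q.
have P0 : 0 <= P := powR_ge0 _ _.
have Q0 : 0 <= Q := powR_ge0 _ _.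
have SQ : s `^ k * Q <= P.
  have [t00|tpos] := eqVneq t 0.
    by rewrite /Q t00 powR0 ?mulr0 // gt_eqF //; lra.
  have tp : 0 < t by rewrite lt_neqAle eq_sym tpos.
  have U0 : 0 < P by apply: powR_gt0.
  have eQ : Q = P * P `^ k.
    rewrite /Q /P -powR1k // -powRrM; congr (_ `^ _); rewrite /k; by field.
  have sU : s * P <= 1.
    have : 0 <= b * Q * s by rewrite mulr_ge0 // mulr_ge0.
    rewrite -/P -/Q in hs; nra.
  have : (s * P) `^ k <= 1.
    have h := @ge0_ler_powR R k (ltW k0) (s * P) 1; rewrite powR1 /= in h.
    by apply: h; rewrite ?nnegrE //; nra.
  move=> h; rewrite (powRM _ s0 P0) in h; rewrite eQ.
  have : s `^ k * P `^ k * P <= P by rewrite ler_piMl // ltW.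
  by rewrite -mulrA [P `^ k * P]mulrC.
have Bp : beta `^ p <= beta by apply: ge1r_powR => //; rewrite b0.
have Bq : beta `^ q <= beta by apply: ge1r_powR; [rewrite b0|lra].
rewrite !powRM ?(ltW b0) // -/P -/Q.
have h1 : beta `^ p * P <= beta * P by rewrite ler_wpM2r.
have h2 : A * (beta `^ q * Q) <= beta * (A * Q).
  by rewrite mulrCA ler_wpM2r // mulr_ge0.
have h3 : A * Q <= C * b * Q + C * P.
  have : A * Q <= C * (b + s `^ k) * Q by rewrite ler_wpM2r.
  have : C * (s `^ k * Q) <= C * P by rewrite ler_wpM2l.
  nra.
have h4 : 0 <= b * Q by rewrite mulr_ge0.
have h5 : beta * (C * b * Q + C * P) = beta * C * (b * Q) + beta * C * P by ring.
have h6 : beta * C * (b * Q) <= b * Q by rewrite ler_piMl //; nra.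
have h7 : beta * P + beta * C * P <= P by nra.
nra.
Qed.

End Real.
Lemma ae_mono d (T : semiRingOfSetsType d) (R : realFieldType) (mu : set T -> \bar R)
  (P Q : T -> Prop) : (forall x, P x -> Q x) ->
  {ae mu, forall x, P x} -> {ae mu, forall x, Q x}.
Proof.
move=> PQ [A [mA A0 sub]]; exists A; split => // x /= nQ; apply: sub => /= /PQ.
exact: nQ.
Qed.

Section Extra.
Context {R : realType}.

Lemma c_ge1 {k : R} : 0 < k -> 1 <= 2 `^ k.
Proof.
move=> k0; have := @ler_powR R 2 _ 0 k (ltW k0); rewrite powRr0; apply; lra.
Qed.

Lemma half_pow (k : R) : 0 < k -> (2^-1) `^ k = (2 `^ k)^-1.
Proof.
move=> k0; have c1 := c_ge1 k0.
apply: (mulIf (x := 2 `^ k)); first by rewrite gt_eqF //; lra.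
rewrite mulVf; last by rewrite gt_eqF //; lra.
by rewrite -powRM ?mulVf ?powR1 //; lra.
Qed.

End Extra.

Theorem lemma5p9 (R : realType) (n : nat) (O : set (n.-tuple R))
    (w : n.-tuple R -> R) (p q : R) (a : n.-tuple R -> R) :
  (0 < n)%N ->
  open_Rn O ->
  is_weight w ->
  1 <= p -> p < q ->
  Linfty O a -> (forall x, O x -> 0 <= a x) ->
  A1w w O (double_phase p q a) <->
  exists C : R,
    forall B, is_open_ball B ->
      {ae @lebn R n, forall x, (B `&` O) x ->
        {ae @lebn R n, forall y, (B `&` O) y ->
          a x <= C * (a y + fine (wmeas w B) `^ ((q - p) / p))}}.
Proof.
move=> n0 oO [w0 wint] p1 pq [_ [M hM]] a0.
have k0 : 0 < (q - p) / p by rewrite divr_gt0 // ?subr_gt0 //; lra.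
have wge0 : forall B, (0 <= wmeas w B)%E.
  by move=> B; apply: integral_ge0_any => x _; rewrite lee_fin.
have wfin : forall B, is_open_ball B -> (wmeas w B < +oo)%E.
  move=> B [x [r [r0 ->]]]; have /integrableP [_ h] := wint x r r0.
  have e : (fun y => `|(EFin \o w) y|%E) = (fun y => (w y)%:E).
    by apply: funext => y /=; rewrite ger0_norm.
  by rewrite e in h.
have wE : forall B, is_open_ball B -> wmeas w B = (fine (wmeas w B))%:E.
  by move=> B hB; rewrite fineK // ge0_fin_numE ?wfin.
split.
- move=> [beta [/andP[b0 b1] HA]].
  set k := (q - p) / p in k0 *.
  set c := 2 `^ k.
  have c1 : 1 <= c := c_ge1 k0.
  set M' := Num.max M 0.
  have M'0 : 0 <= M' by rewrite le_max lexx orbT.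
  have MM' : M <= M' by rewrite le_max lexx.
  have bq0 : 0 < beta `^ q by apply: powR_gt0.
  exists ((c + 2) / beta `^ q + M' * c).
  move=> B hB.
  set s := fine (wmeas w B).
  have s0 : 0 <= s := fine_ge0 (wge0 B).
  have sk0 : 0 <= s `^ k := powR_ge0 _ _.
  case: (lerP s 2^-1) => hs.
    have wle1 : (wmeas w B <= 1)%E by rewrite wE // -/s lee_fin; lra.
    apply: ae_mono (HA B hB wle1) => x Hx BOx.
    apply: ae_mono (Hx BOx) => y Hy BOy.
    have ay0 := a0 y BOy.2; have ax0 := a0 x BOx.2.
    have h := @core1 R p q beta (a y) (a x) s p1 pq b0 s0 hs ay0.
    have {h} h : a x * beta `^ q <= (c + 2) * (a y + s `^ k).
      apply: h => t t0 h1 h2; apply: Hy => //.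
      by rewrite wE // -/s -EFinM lee_fin.
    have e : a x = (a x * beta `^ q) / beta `^ q.
      by rewrite -mulrA mulfV ?mulr1 // gt_eqF.
    rewrite e; set X := a x * beta `^ q in h *.
    have i0 : 0 < (beta `^ q)^-1 by rewrite invr_gt0.
    have : X / beta `^ q <= (c + 2) * (a y + s `^ k) / beta `^ q.
      by rewrite ler_wpM2r // ltW.
    have -> : (c + 2) * (a y + s `^ k) / beta `^ q =
      (c + 2) / beta `^ q * (a y + s `^ k) by rewrite mulrAC.
    have : 0 <= M' * c * (a y + s `^ k) by rewrite !mulr_ge0 //; lra.
    lra.
  have hM2 := hM.
  apply: ae_mono hM => x Hx BOx.
  apply: ae_mono hM2 => y _ BOy.
  have ay0 := a0 y BOy.2.
  have axM : a x <= M' by apply: le_trans MM'; apply: le_trans (Hx BOx.2); exact: ler_norm.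
  have sk : c^-1 <= s `^ k.
    rewrite /c -half_pow //; apply: ge0_ler_powR; rewrite ?nnegrE; lra.
  have csk : 1 <= c * s `^ k.
    by rewrite -(mulfV (x := c)) ?ler_wpM2l ?gt_eqF //; lra.
  have : M' <= M' * c * (a y + s `^ k).
    have : M' * 1 <= M' * (c * s `^ k) by rewrite ler_wpM2l.
    have : 0 <= M' * c * a y by rewrite !mulr_ge0 //; lra.
    rewrite mulr1; nra.
  have : 0 <= (c + 2) / beta `^ q * (a y + s `^ k).
    apply: mulr_ge0; last lra.
    by apply: mulr_ge0; [lra|rewrite invr_ge0 ltW].
  lra.
- move=> [C HC].
  set C' := Num.max C 0.
  have C'0 : 0 <= C' by rewrite le_max lexx orbT.
  have CC' : C <= C' by rewrite le_max lexx.
  exists (1 + C')^-1; split.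
    apply/andP; split; first by rewrite invr_gt0; lra.
    by rewrite invf_le1; lra.
  move=> B hB wle1.
  set s := fine (wmeas w B).
  have s0 : 0 <= s := fine_ge0 (wge0 B).
  apply: ae_mono (HC B hB) => x Hx BOx.
  apply: ae_mono (Hx BOx) => y Hy BOy t t0 h1 h2.
  have ay0 := a0 y BOy.2; have ax0 := a0 x BOx.2.
  rewrite wE // -/s -EFinM lee_fin in h2.
  rewrite /double_phase in h2 *.
  apply: (@core2 R p q _ C' s) => //.
  + by rewrite invr_gt0; lra.
  + by rewrite invf_le1; lra.
  + by rewrite mulVf // gt_eqF //; lra.
  + apply: le_trans (Hy BOy) _; apply: ler_wpM2r => //.
    by rewrite addr_ge0 // powR_ge0.
Qed.
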